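(* Let $r,u\in\mathcal{X}$ be in different orbits with $u=(u_1,\dots, u_n)$, $r=(r_1,\dots, r_n)$, $\mathbb{F}_q(r_1)=\mathbb{F}_{q^m}$ and $r\approx u$. Then there exists $G\in \mathrm{TA}_n(\mathbb{F}_q)$ such that $G(r)\not\approx G(u)$.
   Context: Fix $m$, a prime power $q$, $n\geq 3$. $\Delta=\mathrm{Gal}(\mathbb{F}_{q^m}:\mathbb{F}_q)$ acts coordinatewise on $\mathbb{F}_{q^m}^n$; $[v]$ denotes the $\Delta$-orbit of $v$ (for vectors or scalars), and $\mathcal{X}$ is the union of orbits of size $m$ in $\mathbb{F}_{q^m}^n$. $u\approx v$ (weakly conjugate) means $[u_i]=[v_i]$ for all $1\le i\le n$. $\mathrm{TA}_n(\mathbb{F}_q)$ is the tame automorphism group generated by invertible affine maps and triangular maps $(a_1X_1+f_1,\dots,a_nX_n+f_n)$, $a_i\in\mathbb{F}_q^*$, $f_i\in\mathbb{F}_q[X_{i+1},\dots,X_n]$. *)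

(* Defs.v *)
From HB Require Import structures.
From mathcomp Require Import all_boot all_order all_algebra all_field.
From mathcomp Require Import mpoly.
Set Implicit Arguments. Unset Strict Implicit. Unset Printing Implicit Defensive.
Import GRing.Theory.
Local Open Scope ring_scope.

(* L plays the role of F_{q^m}; the subfield F_q is {x | x^q = x}. *)
Section Defs.
Variable (L : finFieldType) (q n : nat).

Definition inFq (x : L) : bool := x ^+ q == x.

Definition isGal (s : {ffun L -> L}) : bool :=
  [&& [forall x, forall y, s (x + y) == s x + s y],
      [forall x, forall y, s (x * y) == s x * s y],
      s 1 == 1, injectiveb s & [forall x, inFq x ==> (s x == x)]].

Definition Delta : {set {ffun L -> L}} := [set s | isGal s].

Definition orbS (x : L) : {set L} := [set (s : {ffun L -> L}) x | s in Delta].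
Definition orbV (v : 'rV[L]_n) : {set 'rV[L]_n} :=
  [set map_mx (fun x => (s : {ffun L -> L}) x) v | s in Delta].

Definition inX (m : nat) (v : 'rV[L]_n) : Prop := #|orbV v| = m.

Definition wconj (u v : 'rV[L]_n) : Prop :=
  forall i : 'I_n, orbS (u 0 i) = orbS (v 0 i).

(* F_q(x) = F_{q^m}: the smallest subfield containing F_q and x is all of L *)
Definition subfield_closed (S : {set L}) : Prop :=
  [/\ 0 \in S, 1 \in S,
      forall a b, a \in S -> b \in S -> a + b \in S,
      forall a, a \in S -> - a \in S &
      (forall a b, a \in S -> b \in S -> a * b \in S) /\
      (forall a, a \in S -> a^-1 \in S)].

Definition generates (x : L) : Prop :=
  forall S : {set L}, subfield_closed S -> (forall y, inFq y -> y \in S) ->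
    x \in S -> S = setT.

(* affine invertible maps over F_q (row-vector convention v |-> v A + b) *)
Definition affine_map (A : 'M[L]_n) (b : 'rV[L]_n) (v : 'rV[L]_n) : 'rV[L]_n :=
  v *m A + b.

Definition tri_map (a : 'I_n -> L) (f : 'I_n -> {mpoly L[n]}) (v : 'rV[L]_n)
  : 'rV[L]_n := \row_i (a i * v 0 i + (f i).@[fun j => v 0 j]).

Definition tri_poly (i : 'I_n) (p : {mpoly L[n]}) : Prop :=
  (forall mo, inFq (p@_mo)) /\
  (forall mo, mo \in msupp p -> forall j : 'I_n, (j <= i)%N -> mo j = 0%N).

Inductive tame : ('rV[L]_n -> 'rV[L]_n) -> Prop :=
| tame_aff (A : 'M[L]_n) (b : 'rV[L]_n) : A \in unitmx -> (forall i j, inFq (A i j)) ->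
    (forall j, inFq (b 0 j)) -> tame (affine_map A b)
| tame_tri (a : 'I_n -> L) (f : 'I_n -> {mpoly L[n]}) : (forall i, a i != 0 /\ inFq (a i)) ->
    (forall i, tri_poly i (f i)) -> tame (tri_map a f)
| tame_comp G H : tame G -> tame H -> tame (G \o H)
| tame_inv G H : tame G -> cancel G H -> cancel H G -> tame H.

End Defs.

(* Main.v *)
Require Import Defs.
From HB Require Import structures.
From mathcomp Require Import all_boot all_order all_algebra all_field all_fingroup.
From mathcomp Require Import mpoly.
From Stdlib Require Import ClassicalEpsilon.
Import GRing.Theory.
Local Open Scope ring_scope.

Section Aux.
Variables (L : finFieldType) (q n : nat) (p k : nat).
Hypothesis pchar : p \in [pchar L].
Hypothesis hq : q = (p ^ k)%N.

Lemma frobD (x y : L) j : (x + y) ^+ (p ^ j) = x ^+ (p ^ j) + y ^+ (p ^ j).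
Proof.
elim: j => [|j IH]; first by rewrite !expn0 !expr1.
rewrite expnSr !exprM IH.
have := pFrobenius_autD_comm pchar (mulrC (x ^+ (p ^ j)) (y ^+ (p ^ j))).
by rewrite !pFrobenius_autE.
Qed.

Lemma qpos : (0 < q)%N.
Proof. rewrite hq expn_gt0; apply/orP; left; exact: (prime_gt0 (pcharf_prime pchar)). Qed.

Lemma inFq0 : inFq q (0 : L).
Proof. by rewrite /inFq expr0n eqn0Ngt qpos. Qed.
Lemma inFq1 : inFq q (1 : L).
Proof. by rewrite /inFq expr1n. Qed.
Lemma inFqD (x y : L) : inFq q x -> inFq q y -> inFq q (x + y).
Proof. by rewrite /inFq hq frobD => /eqP -> /eqP ->. Qed.
Lemma inFqM (x y : L) : inFq q x -> inFq q y -> inFq q (x * y).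
Proof. by rewrite /inFq exprMn => /eqP -> /eqP ->. Qed.
Lemma inFqN (x : L) : inFq q x -> inFq q (- x).
Proof.
rewrite /inFq => /eqP hx.
have h := frobD x (- x) k. rewrite -hq subrr expr0n in h.
move: h; rewrite (negbTE (lt0n_neq0 qpos)) hx => h.
have h2 : x + (- x) ^+ q = x + - x by rewrite subrr -h.
by rewrite (addrI x h2).
Qed.
Lemma inFq_sum (I : finType) (F : I -> L) : (forall i, inFq q (F i)) -> inFq q (\sum_i F i).
Proof.
move=> h; apply: (big_ind (inFq q)) => //; [exact: inFq0| exact: inFqD].
Qed.
Lemma inFq_nat (b : bool) : inFq q (b%:R : L).
Proof. case: b; [exact: inFq1 | exact: inFq0]. Qed.
End Aux.

Section Gal.
Variables (L : finFieldType) (q : nat).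

Lemma GgalP (s : {ffun L -> L}) : isGal q s ->
  [/\ forall x y, s (x + y) = s x + s y, forall x y, s (x * y) = s x * s y,
      s 1 = 1, injective s & forall x, inFq q x -> s x = x].
Proof.
case/and5P => /forallP hD /forallP hM /eqP h1 /injectiveP hi /forallP hF; split => //.
- by move=> x y; apply/eqP; move/forallP: (hD x); apply.
- by move=> x y; apply/eqP; move/forallP: (hM x); apply.
- by move=> x hx; apply/eqP; move/implyP: (hF x); apply.
Qed.

Lemma Gid : isGal q [ffun x : L => x].
Proof.
apply/and5P; split.
- by apply/forallP => x; apply/forallP => y; rewrite !ffunE.
- by apply/forallP => x; apply/forallP => y; rewrite !ffunE.
- by rewrite ffunE.
- by apply/injectiveP => x y; rewrite !ffunE.
- by apply/forallP => x; apply/implyP => _; rewrite ffunE.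
Qed.

Lemma Gcomp (s t : {ffun L -> L}) : isGal q s -> isGal q t ->
  isGal q [ffun x => t (s x)].
Proof.
move=> /GgalP [sD sM s1 si sF] /GgalP [tD tM t1 ti tF].
apply/and5P; split.
- by apply/forallP => x; apply/forallP => y; rewrite !ffunE sD tD.
- by apply/forallP => x; apply/forallP => y; rewrite !ffunE sM tM.
- by rewrite ffunE s1 t1.
- by apply/injectiveP => x y; rewrite !ffunE => /ti /si.
- by apply/forallP => x; apply/implyP => hx; rewrite ffunE sF // tF.
Qed.

Variable s : {ffun L -> L}.
Hypothesis hs : isGal q s.

Lemma Gzero : s 0 = 0.
Proof.
case/GgalP: hs => sD _ _ _ _.
by apply/(addrI (s 0)); rewrite -sD !addr0.
Qed.

Lemma GN x : s (- x) = - s x.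
Proof.
case/GgalP: hs => sD _ _ _ _.
apply/(addrI (s x)); by rewrite -sD !subrr Gzero.
Qed.

Lemma GX x i : s (x ^+ i) = (s x) ^+ i.
Proof.
case/GgalP: hs => _ sM s1 _ _.
by elim: i => [|i IH]; rewrite ?expr0 ?s1 // !exprS sM IH.
Qed.

Lemma Gsum (N : nat) (F : 'I_N -> L) : s (\sum_(i < N) F i) = \sum_(i < N) s (F i).
Proof.
case/GgalP: hs => sD _ _ _ _.
elim: N F => [|N IH] F; first by rewrite !big_ord0 Gzero.
by rewrite !big_ord_recr /= sD IH.
Qed.

Lemma Ghorner (P : {poly L}) x : (forall i, inFq q P`_i) -> s P.[x] = P.[s x].
Proof.
case/GgalP: hs => sD sM s1 _ sF => hP.
rewrite !horner_coef Gsum; apply: eq_bigr => i _.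
by rewrite sM sF // GX.
Qed.

Lemma Ginj0 x : s x = 0 -> x = 0.
Proof. case/GgalP: hs => _ _ _ si _ h; apply: si; by rewrite h Gzero. Qed.
End Gal.

Definition decb (P : Prop) : bool := if excluded_middle_informative P then true else false.
Lemma decbP (P : Prop) : decb P = true <-> P.
Proof. rewrite /decb; case: excluded_middle_informative => //. Qed.

Section Rep.
Variables (L : finFieldType) (q p k : nat).
Hypothesis pchar : p \in [pchar L].
Hypothesis hq : q = (p ^ k)%N.

Definition polyFq (P : {poly L}) := forall i, inFq q P`_i.

Lemma polyFqD P Q : polyFq P -> polyFq Q -> polyFq (P + Q).
Proof. move=> hP hQ i; rewrite coefD; exact: (inFqD _ _ _ _ pchar hq). Qed.
Lemma polyFqN P : polyFq P -> polyFq (- P).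
Proof. move=> hP i; rewrite coefN; exact: (inFqN _ _ _ _ pchar hq). Qed.
Lemma polyFqM P Q : polyFq P -> polyFq Q -> polyFq (P * Q).
Proof.
move=> hP hQ i; rewrite coefM; apply: (inFq_sum _ _ _ _ pchar hq) => // j; exact: (inFqM _ _ _ _).
Qed.
Lemma polyFqC c : inFq q c -> polyFq c%:P.
Proof. move=> hc i; rewrite coefC; case: eqP => _ //; exact: (inFq0 _ _ _ _ pchar hq). Qed.
Lemma polyFqX : polyFq 'X.
Proof. move=> i; rewrite coefX; exact: (inFq_nat _ _ _ _ pchar hq). Qed.
Lemma polyFqXn P j : polyFq P -> polyFq (P ^+ j).
Proof.
move=> hP; elim: j => [|j IH]; first by rewrite expr0; apply: polyFqC; exact: (inFq1 L q).
by rewrite exprS; apply: polyFqM.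
Qed.

Lemma represent (r0 : L) : generates q r0 ->
  forall y, exists P, polyFq P /\ P.[r0] = y.
Proof.
move=> hg.
pose S := [set y : L | decb (exists P, polyFq P /\ P.[r0] = y)].
have inS y : (y \in S) <-> exists P, polyFq P /\ P.[r0] = y.
  by rewrite inE; exact: decbP.
have ST : S = setT.
  apply: hg.
  - split.
    + apply/inS; exists 0; split; [move=> i; rewrite coef0; exact: (inFq0 _ _ _ _ pchar hq) | by rewrite horner0].
    + apply/inS; exists 1; split; [exact: polyFqC (inFq1 L q) | by rewrite hornerC].
    + move=> a b /inS [P [hP <-]] /inS [Q [hQ <-]]; apply/inS.
      by exists (P + Q); split; [exact: polyFqD | rewrite hornerD].
    + move=> a /inS [P [hP <-]]; apply/inS.
      by exists (- P); split; [exact: polyFqN | rewrite hornerN].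
    split.
    + move=> a b /inS [P [hP <-]] /inS [Q [hQ <-]]; apply/inS.
      by exists (P * Q); split; [exact: polyFqM | rewrite hornerM].
    + move=> a /inS [P [hP <-]]; apply/inS.
      have [->|nz] := eqVneq P.[r0] 0.
        exists 0; split; [move=> i; rewrite coef0; exact: (inFq0 _ _ _ _ pchar hq) | by rewrite horner0 invr0].
      exists (P ^+ (#|L|.-2)); split; first exact: polyFqXn.
      rewrite horner_exp.
      have c2 : (1 < #|L|)%N.
        apply/card_gt1P; exists 0, 1; split => //; rewrite eq_sym; exact: oner_neq0.
      have e := expf_card P.[r0].
      have hN : #|L| = (#|L|.-2).+2 by move: c2; case: #|L| => [|[|]].
      rewrite hN !exprS mulrA in e.
      have e2 : P.[r0] * (P.[r0] * P.[r0] ^+ #|L|.-2) = P.[r0] * 1 by rewrite mulrA e mulr1.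
      have e3 := mulfI nz e2.
      by rewrite -(mulKf nz (P.[r0] ^+ #|L|.-2)) e3 mulr1.
  - move=> y hy; apply/inS; exists y%:P; split; [exact: polyFqC | by rewrite hornerC].
  - apply/inS; exists 'X; split; [exact: polyFqX | by rewrite hornerX].
move=> y; apply/inS; by rewrite ST inE.
Qed.
End Rep.

Theorem mainTheorem11 (L : finFieldType) (q m n : nat)
  (Hq : exists p k : nat, prime p /\ (0 < k)%N /\ q = (p ^ k)%N)
  (Hm : (0 < m)%N) (HL : #|L| = (q ^ m)%N) (Hn : (3 <= n)%N)
  (r u : 'rV[L]_n) :
  inX q m r -> inX q m u -> orbV q r != orbV q u ->
  (forall i : 'I_n, nat_of_ord i = 0%N -> generates q (r 0 i)) ->
  wconj q r u ->
  exists G : 'rV[L]_n -> 'rV[L]_n, tame q G /\ ~ wconj q (G r) (G u).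
Proof.
move=> Xr Xu neq hgen hw.
case: Hq => p [k [pp [kp hq]]].
have pc : p \in [pchar L].
  by apply: (@card_finPcharP _ _ (k * m)) => //; rewrite HL hq expnM.
have n0 : (0 < n)%N by apply: leq_trans Hn.
have nl : (n.-1 < n)%N by rewrite prednK.
pose o0 := Ordinal n0. pose ol := Ordinal nl.
have gen := hgen o0 erefl.
have hu0 : u 0 o0 \in orbS q (r 0 o0).
  rewrite (hw o0); apply/imsetP; exists [ffun x : L => x]; last by rewrite ffunE.
  by rewrite /Delta inE; exact: Gid.
case/imsetP: hu0 => sg; rewrite /Delta inE => hsg eu0.
case: (pickP (fun i => u 0 i != sg (r 0 i))) => [i0 hi0 | hall]; last first.
  have eu : u = map_mx sg r.
    by apply/matrixP => a b; rewrite (ord1 a) mxE; move: (hall b) => /negbFE/eqP.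
  have sub : orbV q u \subset orbV q r.
    apply/subsetP => v /imsetP [t]; rewrite /Delta inE => ht ->.
    apply/imsetP; exists [ffun x => t (sg x)]; first by rewrite /Delta inE; exact: Gcomp.
    by rewrite eu; apply/matrixP => a b; rewrite !mxE ffunE.
  have : orbV q u == orbV q r by rewrite eqEcard sub /= Xr Xu.
  by rewrite eq_sym (negbTE neq).
have i0n : i0 != o0.
  by apply/eqP => e; move: hi0; rewrite e eu0 eqxx.
case: (represent _ _ _ _ pc hq _ gen (- r 0 i0)) => P [hP eP].
pose s := tperm o0 ol.
pose kk := s i0.
have kkl : kk != ol.
  apply/eqP => e; move/eqP: i0n; apply.
  by rewrite -(tpermK o0 ol i0) -/s -/kk e tpermR.
have kklt : (kk < n.-1)%N.
  have h1 : (kk : nat) != n.-1 by apply: contra kkl => /eqP e; apply/eqP/val_inj.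
  by rewrite ltn_neqAle h1 /= -ltnS prednK.
pose F : {mpoly L[n]} := \sum_(i < size P) P`_i *: 'X_ol ^+ i.
pose Ffn := fun i => if i == kk then F else 0.
pose A : 'M[L]_n := perm_mx s.
pose G := tri_map (fun _ => 1) Ffn \o affine_map A 0.
have permE (v : 'rV[L]_n) j : (v *m A) 0 j = v 0 (s j).
  have -> : v *m A = col_perm s^-1 v by rewrite col_permE invgK.
  by rewrite mxE tpermV.
have evalG (v : 'rV[L]_n) : (G v) 0 kk = v 0 i0 + P.[v 0 o0].
  rewrite /G /= /tri_map /affine_map mxE /Ffn eqxx mul1r addr0 permE tpermK.
  congr (_ + _).
  rewrite /F raddf_sum horner_coef; apply: eq_bigr => i _.
  rewrite /= mevalZ rmorphXn /= mevalXU permE /s tpermR //.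
exists G; split.
  apply: tame_comp.
    apply: tame_tri.
      by move=> i; split; [exact: oner_neq0 | exact: inFq1].
    move=> ii; rewrite /Ffn; case: eqP => [->|_]; last first.
      by split; [move=> mo; rewrite mcoeff0; exact: (inFq0 _ _ _ _ pc hq) | move=> mo; rewrite msupp0].
    split.
      move=> mo; rewrite /F raddf_sum; apply: (inFq_sum _ _ _ _ pc hq) => i.
      rewrite /= mcoeffZ mcoeffXn; apply: inFqM; [exact: hP | exact: (inFq_nat _ _ _ _ pc hq)].
    move=> mo; rewrite mcoeff_msupp => hmo j hj.
    case: (pickP (fun i : 'I_(size P) => (P`_i *: 'X_ol ^+ i : {mpoly L[n]})@_mo != 0)) => [i hi | h0]; last first.
      move: hmo; rewrite /F raddf_sum big1 ?eqxx // => i _.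
      by apply/eqP; move: (h0 i) => /negbFE.
    move: hi; rewrite mcoeffZ mcoeffXn; case E: ((U_(ol) *+ i)%MM == mo); last by rewrite -[X in _ * X]/(0 : L) mulr0 eqxx.
    move=> _; move/eqP: E => e1.
    rewrite -e1.
    rewrite mulmnE mnm1E; case: eqP => // e.
    have hh : (n.-1 <= kk)%N by rewrite -[n.-1]/(val ol) e.
    by rewrite ltnNge hh in kklt.
  apply: tame_aff.
  - exact: unitmx_perm.
  - by move=> i j; rewrite /A /perm_mx /row_perm !mxE; exact: (inFq_nat _ _ _ _ pc hq).
  - by move=> j; rewrite mxE; exact: (inFq0 _ _ _ _ pc hq).
move=> hw2; move: (hw2 kk); rewrite !evalG eP eu0 -(Ghorner _ _ _ hsg _ _ hP) eP (GN _ _ _ hsg) subrr.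
set y := _ + _ => ey.
have y0 : y != 0 by rewrite /y subr_eq0.
have : (0 : L) \in orbS q y.
  rewrite -ey; apply/imsetP; exists [ffun x : L => x]; last by rewrite ffunE.
  by rewrite /Delta inE; exact: Gid.
case/imsetP => t; rewrite /Delta inE => ht /esym/(Ginj0 _ _ _ ht) e.
by rewrite e eqxx in y0.
Qed.
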